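(* Let $(X,V)$ and $(\overline{X},\overline{V})$ be global solutions of the discrete Motsch–Tadmor model (as in the context) whose initial data satisfy \[ \max\{\|\Delta^x(0)\|_F,\|\Delta^{\overline{x}}(0)\|_F\}<M,\quad \|\Delta^v(0)\|_F<\kappa\int_{\|\Delta^x(0)\|_F}^M\psi(s)\,ds,\quad \|\Delta^{\overline{v}}(0)\|_F<\kappa\int_{\|\Delta^{\overline{x}}(0)\|_F}^M\psi(s)\,ds. \] For $i,j\in\{1,\dots,N\}$ and $n\ge0$ let \[ \mathcal{I}_1^{ij}=h\kappa\sum_{l=1}^N(\phi_{il}(n)-\overline{\phi}_{il}(n))\Delta^v_{li}(n)-h\kappa\sum_{l=1}^N(\phi_{jl}(n)-\overline{\phi}_{jl}(n))\Delta^v_{lj}(n). \] Then \[ \sum_{i,j=1}^N\|\mathcal{I}_1^{ij}\|^2\le\frac{16h^2\kappa^2L_a^2M^2}{c_1^2}\Big(1+\frac{c_2}{c_1}\Big)^2\|\Delta^v(n)\|_F^2 . \]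
   Context: Discrete MT model: fix $N\ge1$, $d\ge1$, $\kappa>0$, $h>0$, and $a:[0,\infty)\to\mathbb{R}$ with constants $0<c_1\le c_2$, $c_1\le a\le c_2$, $|a(r_1)-a(r_2)|\le L_a|r_1-r_2|$ ($L_a>0$); $0<h<\min\{1,1/\kappa\}$. A solution satisfies $x_i(n+1)=x_i(n)+hv_i(n)$, $v_i(n+1)=v_i(n)+h\kappa\sum_j\phi_{ij}(n)(v_j(n)-v_i(n))$ with $\phi_{ij}(n)=\frac{a(\|x_i(n)-x_j(n)\|)}{\sum_ka(\|x_i(n)-x_k(n)\|)}$; $\overline{\phi}_{ij}(n)$ is defined likewise from $\overline{X}(n)$. Notation: $\Delta^x_{ij}=x_i-x_j$, $\Delta^v_{ij}=v_i-v_j$, similarly $\Delta^{\overline{x}},\Delta^{\overline{v}}$; $\|A\|_F=(\sum_{i,j}\|A_{ij}\|^2)^{1/2}$. Constants: $\|\phi\|_{\mathrm{Lip}}=\frac{L_a}{Nc_1}(1+\frac{c_2}{c_1})$, $M=\frac{1}{4N\|\phi\|_{\mathrm{Lip}}}$, $\psi(s)=1-\|\phi\|_{\mathrm{Lip}}Ns$. *)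

(* Defs.v *)
From HB Require Import structures.
From mathcomp Require Import all_boot all_order all_algebra.
From mathcomp Require Import all_classical all_reals all_analysis.
Set Implicit Arguments. Unset Strict Implicit. Unset Printing Implicit Defensive.
Import Order.TTheory GRing.Theory Num.Theory.
Import numFieldNormedType.Exports.
Local Open Scope classical_set_scope.
Local Open Scope ring_scope.

(* Vectors of R^d are functions 'I_d -> R; agents are indexed by 'I_N
   (i.e. {0,..,N-1} in place of {1,..,N}). *)

Definition enorm (R : realType) (d : nat) (v : 'I_d -> R) : R :=
  Num.sqrt (\sum_(k < d) v k ^+ 2).

Definition delta (R : realType) (N d : nat) (y : 'I_N -> 'I_d -> R)
  (i j : 'I_N) : 'I_d -> R := fun k => y i k - y j k.

Definition frob (R : realType) (N d : nat) (y : 'I_N -> 'I_d -> R) : R :=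
  Num.sqrt (\sum_(i < N) \sum_(j < N) enorm (delta y i j) ^+ 2).

Definition phiMT (R : realType) (N d : nat) (a : R -> R)
  (X : nat -> 'I_N -> 'I_d -> R) (n : nat) (i j : 'I_N) : R :=
  a (enorm (delta (X n) i j)) / \sum_(k < N) a (enorm (delta (X n) i k)).

Definition MT_solution (R : realType) (N d : nat) (kappa h : R) (a : R -> R)
  (X V : nat -> 'I_N -> 'I_d -> R) : Prop :=
  forall (n : nat) (i : 'I_N) (k : 'I_d),
    X n.+1 i k = X n i k + h * V n i k /\
    V n.+1 i k = V n i k
                 + h * kappa * \sum_(j < N) phiMT a X n i j * (V n j k - V n i k).

Definition phiLip (R : realType) (N : nat) (c1 c2 La : R) : R :=
  La / (N%:R * c1) * (1 + c2 / c1).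

Definition Mconst (R : realType) (N : nat) (c1 c2 La : R) : R :=
  1 / (4 * N%:R * phiLip N c1 c2 La).

Definition psi (R : realType) (N : nat) (c1 c2 La : R) (s : R) : R :=
  1 - phiLip N c1 c2 La * N%:R * s.

(* Lebesgue integral int_lo^hi psi(s) ds (for lo <= hi) *)
Definition int_psi (R : realType) (N : nat) (c1 c2 La lo hi : R) : R :=
  (\int[lebesgue_measure]_(s in `[lo, hi]) psi N c1 c2 La s)%R.

Definition I1 (R : realType) (N d : nat) (kappa h : R) (a : R -> R)
  (X V Xb : nat -> 'I_N -> 'I_d -> R) (n : nat) (i j : 'I_N) : 'I_d -> R :=
  fun k =>
    h * kappa * \sum_(l < N) (phiMT a X n i l - phiMT a Xb n i l) * delta (V n) l i k
  - h * kappa * \sum_(l < N) (phiMT a X n j l - phiMT a Xb n j l) * delta (V n) l j k.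

(* Main.v *)
Require Import Defs.
From HB Require Import structures.
From mathcomp Require Import all_boot all_order all_algebra.
From mathcomp Require Import all_classical all_reals all_analysis.
Import Order.TTheory GRing.Theory Num.Theory.
Import numFieldNormedType.Exports.
From mathcomp Require Import lra.
Local Open Scope ring_scope.

Lemma int_psi_le (R : realType) (N : nat) (c1 c2 La lo hi : R) :
  0 <= lo -> lo <= hi -> 0 <= phiLip N c1 c2 La ->
  int_psi N c1 c2 La lo hi <= hi - lo.
Proof.
move=> lo0 lohi pL0.
rewrite /int_psi.
have mD : measurable (`[lo, hi] : set R) by exact: measurable_itv.
apply: (@le_trans _ _ (\int[lebesgue_measure]_(s in `[lo, hi]) (1:R))%R).
  apply: le_Rintegral => //.
  - apply: continuous_compact_integrable; first exact: segment_compact.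
    apply: continuous_subspaceT => x.
    rewrite /psi.
    apply: continuousB; first exact: cst_continuous.
    apply: continuousM; first exact: cst_continuous.
    by [].
  - apply: continuous_compact_integrable; first exact: segment_compact.
    apply: continuous_subspaceT => x; exact: cst_continuous.
  - move=> x; rewrite /= in_itv /= => /andP[lx xh].
    have x0 : 0 <= x by exact: le_trans lx.
    by rewrite /psi lerBlDr lerDl mulr_ge0 // mulr_ge0.
idtac.
rewrite /Rintegral.
rewrite -[X in fine X]/(\int[lebesgue_measure]_(x in `[lo,hi]) (cst (1:R)%:E x))%E integral_cst //.
rewrite mul1e.
apply: (@le_trans _ _ (fine (lebesgue_measure (`[lo, hi] : set R)))); first exact: lexx.
rewrite lebesgue_measure_itv /=.
case: ifP => _ /=; first lra.
by rewrite subr_ge0.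
Qed.

From mathcomp Require Import ring.

Section Gen.
Variable R : realType.

Lemma CS (I : finType) (f g : I -> R) :
  (\sum_i f i * g i) ^+ 2 <= (\sum_i f i ^+ 2) * (\sum_i g i ^+ 2).
Proof.
set A := \sum_i f i ^+ 2; set B := \sum_i g i ^+ 2; set C := \sum_i f i * g i.
have key t : 0 <= A - 2 * t * C + t ^+ 2 * B.
  have -> : A - 2 * t * C + t ^+ 2 * B = \sum_i (f i - t * g i) ^+ 2.
    rewrite /A /B /C mulr_sumr mulrC mulr_sumr -sumrN -!big_split /=.
    apply: eq_bigr => i _; ring.
  by apply: sumr_ge0 => i _; exact: sqr_ge0.
have B0 : 0 <= B by apply: sumr_ge0 => i _; exact: sqr_ge0.
case: (eqVneq B 0) => [Be|Bne].
  have g0 : forall i, g i = 0.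
    move=> i; apply/eqP; rewrite -sqrf_eq0; apply/eqP.
    by move/psumr_eq0P: Be => ->// j _; exact: sqr_ge0.
  have -> : C = 0 by rewrite /C big1 // => i _; rewrite g0 mulr0.
  by rewrite expr0n /= mulr_ge0 //; apply: sumr_ge0 => i _; exact: sqr_ge0.
have Bp : 0 < B by rewrite lt_def Bne B0.
have := mulr_ge0 (key (C / B)) B0.
have -> : (A - 2 * (C / B) * C + (C / B) ^+ 2 * B) * B = A * B - C ^+ 2.
  by field.
lra.
Qed.

Definition nr {I : finType} (f : I -> R) := Num.sqrt (\sum_i f i ^+ 2).

Lemma sum_sq_ge0 (I : finType) (f : I -> R) : 0 <= \sum_i f i ^+ 2.
Proof. by apply: sumr_ge0 => i _; exact: sqr_ge0. Qed.

Lemma nr_ge0 (I : finType) (f : I -> R) : 0 <= nr f.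
Proof. exact: sqrtr_ge0. Qed.

Lemma nr2 (I : finType) (f : I -> R) : nr f ^+ 2 = \sum_i f i ^+ 2.
Proof. by rewrite sqr_sqrtr // sum_sq_ge0. Qed.

Lemma nr_le_sq (I : finType) (f : I -> R) x : 0 <= x ->
  \sum_i f i ^+ 2 <= x ^+ 2 -> nr f <= x.
Proof.
move=> x0 H; rewrite -(ler_pXn2r (_ : (0 < 2)%N)) ?nnegrE ?nr_ge0 //.
by rewrite nr2.
Qed.

Lemma nr_tri (I : finType) (f g : I -> R) :
  nr (fun i => f i + g i) <= nr f + nr g.
Proof.
apply: nr_le_sq; first by rewrite addr_ge0 ?nr_ge0.
have cs : \sum_i f i * g i <= nr f * nr g.
  have [le0|gt0] := lerP (\sum_i f i * g i) 0.
    by apply: le_trans le0 _; rewrite mulr_ge0 ?nr_ge0.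
  rewrite -(ler_pXn2r (_ : (0 < 2)%N)) ?nnegrE ?mulr_ge0 ?nr_ge0 ?(ltW gt0) //.
  by rewrite exprMn !nr2; exact: CS.
have -> : \sum_i (f i + g i) ^+ 2 = \sum_i f i ^+ 2 + \sum_i g i ^+ 2 + 2 * \sum_i f i * g i.
  rewrite mulr_sumr -!big_split /=; apply: eq_bigr => i _; ring.
rewrite -!nr2; lra.
Qed.

Lemma nr_scale (I : finType) (f : I -> R) c : 0 <= c ->
  nr (fun i => c * f i) <= c * nr f.
Proof.
move=> c0; apply: nr_le_sq; first by rewrite mulr_ge0 ?nr_ge0.
by rewrite exprMn nr2 mulr_sumr; apply: ler_sum => i _; rewrite exprMn.
Qed.

Lemma single_le_sum (I : finType) (F : I -> R) i :
  (forall j, 0 <= F j) -> F i <= \sum_j F j.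
Proof.
move=> H; rewrite (bigD1 i) //= lerDl; apply: sumr_ge0 => j _; exact: H.
Qed.

Lemma sq_le (x y : R) : `|x| <= y -> x ^+ 2 <= y ^+ 2.
Proof. rewrite ler_norml => /andP[h1 h2]; nra. Qed.

Lemma sum_cst_ord (N : nat) (x : R) : \sum_(m < N) x = N%:R * x.
Proof. by rewrite sumr_const card_ord mulr_natl. Qed.

Lemma phidiff (N : nat) (c1 c2 e : R) (al be : 'I_N -> R) (l : 'I_N) :
  0 < c1 ->
  (forall m, c1 <= al m /\ al m <= c2) ->
  (forall m, c1 <= be m /\ be m <= c2) ->
  (forall m, `|al m - be m| <= e) ->
  `|al l / (\sum_m al m) - be l / (\sum_m be m)|
     <= e / (N%:R * c1) * (1 + c2 / c1).
Proof.
move=> c10 ha hb he.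
have hN : (0 < N)%N by case: N l {ha hb he al be} => [[]|].
have e0 : 0 <= e by exact: le_trans (normr_ge0 _) (he l).
have N0 : 0 < N%:R :> R by rewrite ltr0n.
have sumlb (g : 'I_N -> R) : (forall m, c1 <= g m /\ g m <= c2) ->
    N%:R * c1 <= \sum_m g m.
  move=> hg; have : \sum_(m < N) c1 <= \sum_m g m.
    by apply: ler_sum => m _; case: (hg m).
  by rewrite sum_cst_ord.
have Sa := sumlb _ ha; have Sb := sumlb _ hb.
set A := \sum_m al m in Sa *; set B := \sum_m be m in Sb *.
have Nc1 : 0 < N%:R * c1 by rewrite mulr_gt0.
have A0 : 0 < A by exact: lt_le_trans Sa.
have B0 : 0 < B by exact: lt_le_trans Sb.
have dAB : `|B - A| <= N%:R * e.
  rewrite /A /B -sumrB; apply: le_trans (ler_norm_sum _ _ _) _.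
  have : \sum_(m < N) `|be m - al m| <= \sum_(m < N) e.
    by apply: ler_sum => m _; rewrite distrC.
  by rewrite sum_cst_ord.
have -> : al l / A - be l / B = (al l - be l) * A^-1 + be l * (B - A) * (A^-1 * B^-1).
  by field; rewrite ?gt_eqF.
set q := (N%:R * c1)^-1.
have uq : A^-1 <= q by rewrite lef_pV2 ?posrE.
have wq : B^-1 <= q by rewrite lef_pV2 ?posrE.
have u0 : 0 <= A^-1 by rewrite invr_ge0 ltW.
have w0 : 0 <= B^-1 by rewrite invr_ge0 ltW.
have q0 : 0 <= q by rewrite invr_ge0 ltW.
apply: le_trans (ler_normD _ _) _.
rewrite !normrM (ger0_norm u0) (ger0_norm w0).
have hbl : `|be l| <= c2 by case: (hb l) => h1 h2; rewrite ger0_norm // (le_trans (ltW c10)).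
have t1 : `|al l - be l| * A^-1 <= e * q by apply: ler_pM.
have t2 : `|be l| * `|B - A| <= c2 * (N%:R * e) by apply: ler_pM.
have t3 : A^-1 * B^-1 <= q * q by apply: ler_pM.
have t4 : `|be l| * `|B - A| * (A^-1 * B^-1) <= c2 * (N%:R * e) * (q * q).
  by apply: ler_pM => //; rewrite mulr_ge0.
have -> : e / (N%:R * c1) * (1 + c2 / c1) = e * q + c2 * (N%:R * e) * (q * q).
  by rewrite /q; field; rewrite ?gt_eqF.
lra.
Qed.

End Gen.
Arguments nr {R I}.

Section Model.
Variables (R : realType) (N d : nat) (kappa h c1 c2 La : R) (a : R -> R).
Hypothesis hN : (1 <= N)%N.
Hypothesis hc1 : 0 < c1.
Hypothesis hLa : 0 < La.
Hypothesis ha_b : forall r, 0 <= r -> c1 <= a r /\ a r <= c2.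
Hypothesis ha_l : forall r1 r2, 0 <= r1 -> 0 <= r2 -> `|a r1 - a r2| <= La * `|r1 - r2|.

Lemma enorm_ge0 (v : 'I_d -> R) : 0 <= enorm v.
Proof. exact: sqrtr_ge0. Qed.

Lemma enorm2 (v : 'I_d -> R) : enorm v ^+ 2 = \sum_k v k ^+ 2.
Proof. exact: (@nr2 R 'I_d). Qed.

Lemma enorm_sym (y : 'I_N -> 'I_d -> R) i j :
  enorm (delta y i j) = enorm (delta y j i).
Proof.
rewrite /enorm /delta; congr Num.sqrt; apply: eq_bigr => k _.
by rewrite -sqrrN opprB.
Qed.

Lemma enorm_tri (y : 'I_N -> 'I_d -> R) i j m :
  enorm (delta y i m) <= enorm (delta y i j) + enorm (delta y j m).
Proof.
have E : delta y i m = (fun k => delta y i j k + delta y j m k).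
  by apply/funext => k; rewrite /delta; ring.
rewrite E; exact: (@nr_tri R 'I_d).
Qed.

Lemma a_lip (y : 'I_N -> 'I_d -> R) i j m :
  `|a (enorm (delta y i m)) - a (enorm (delta y j m))| <= La * enorm (delta y i j).
Proof.
apply: le_trans (ha_l _ _ (enorm_ge0 _) (enorm_ge0 _)) _.
rewrite ler_pM2l //  ler_norml.
have := enorm_tri y i j m; have := enorm_tri y j i m; rewrite (enorm_sym y j i).
move=> h1 h2; apply/andP; split; lra.
Qed.

Lemma sum_a_pos (y : 'I_N -> 'I_d -> R) i :
  0 < \sum_m a (enorm (delta y i m)).
Proof.
have : \sum_(m < N) c1 <= \sum_m a (enorm (delta y i m)).
  by apply: ler_sum => m _; case: (ha_b _ (enorm_ge0 (delta y i m))).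
rewrite sum_cst_ord; apply: lt_le_trans; by rewrite mulr_gt0 // ltr0n.
Qed.

Lemma phisum (X : nat -> 'I_N -> 'I_d -> R) n i :
  \sum_l phiMT a X n i l = 1.
Proof.
by rewrite /phiMT -mulr_suml divff // gt_eqF // sum_a_pos.
Qed.

Lemma phi_ge0 (X : nat -> 'I_N -> 'I_d -> R) n i l : 0 <= phiMT a X n i l.
Proof.
have h0 : 0 <= a (enorm (delta (X n) i l)).
  by case: (ha_b _ (enorm_ge0 (delta (X n) i l))) => h1 _; exact: le_trans (ltW hc1) h1.
by rewrite /phiMT divr_ge0 // (ltW (sum_a_pos _ _)).
Qed.

Lemma philip (X : nat -> 'I_N -> 'I_d -> R) n i j l :
  `|phiMT a X n i l - phiMT a X n j l| <= phiLip N c1 c2 La * enorm (delta (X n) i j).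
Proof.
apply: le_trans.
  apply: (@phidiff R N c1 c2 (La * enorm (delta (X n) i j))
     (fun m => a (enorm (delta (X n) i m))) (fun m => a (enorm (delta (X n) j m))) l hc1).
  - move=> m; exact: ha_b _ (enorm_ge0 _).
  - move=> m; exact: ha_b _ (enorm_ge0 _).
  - move=> m; exact: a_lip.
rewrite /phiLip le_eqVlt; apply/orP; left; apply/eqP; ring.
Qed.

Lemma frob_ge0 (y : 'I_N -> 'I_d -> R) : 0 <= frob y.
Proof. exact: sqrtr_ge0. Qed.

Lemma frob2 (y : 'I_N -> 'I_d -> R) :
  frob y ^+ 2 = \sum_i \sum_j \sum_k delta y i j k ^+ 2.
Proof.
rewrite /frob sqr_sqrtr; last by do 2 (apply: sumr_ge0 => ? _); exact: sqr_ge0.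
by apply: eq_bigr => i _; apply: eq_bigr => j _; rewrite enorm2.
Qed.

Lemma frobN (y : 'I_N -> 'I_d -> R) :
  frob y = nr (fun p : 'I_N * 'I_N * 'I_d => delta y p.1.1 p.1.2 p.2).
Proof.
rewrite /frob /nr; congr Num.sqrt.
transitivity (\sum_i \sum_j \sum_k delta y i j k ^+ 2).
  by apply: eq_bigr => i _; apply: eq_bigr => j _; rewrite enorm2.
rewrite pair_big /= pair_big /=; done.
Qed.

Lemma trip (F : 'I_N * 'I_N * 'I_d -> R) :
  \sum_p F p = \sum_i \sum_j \sum_k F ((i, j), k).
Proof.
symmetry; rewrite pair_big /= pair_big /=.
by apply: eq_bigr => [[[i j] k]].
Qed.

Hypothesis hk : 0 < kappa.
Hypothesis hh : 0 < h.
Hypothesis hhk : h < 1 / kappa.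
Hypothesis hc12 : c1 <= c2.

Lemma hk1 : h * kappa < 1.
Proof. by move: hhk; rewrite ltr_pdivlMr. Qed.

Lemma Xstep (X V : nat -> 'I_N -> 'I_d -> R) n :
  MT_solution kappa h a X V -> frob (X n.+1) <= frob (X n) + h * frob (V n).
Proof.
move=> Hs; rewrite !frobN.
have E : (fun p : 'I_N * 'I_N * 'I_d => delta (X n.+1) p.1.1 p.1.2 p.2) =
  (fun p => delta (X n) p.1.1 p.1.2 p.2 + h * delta (V n) p.1.1 p.1.2 p.2).
  apply/funext => p; rewrite /delta !(proj1 (Hs n _ _)); ring.
rewrite E; apply: le_trans (nr_tri _ _ _ _) _; rewrite lerD2l.
by apply: nr_scale; rewrite ltW.
Qed.

Definition W (X V : nat -> 'I_N -> 'I_d -> R) n (p : 'I_N * 'I_N * 'I_d) :=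
  \sum_l (phiMT a X n p.1.1 l - phiMT a X n p.1.2 l) * (V n l p.2 - V n p.1.1 p.2).

Lemma Vstep (X V : nat -> 'I_N -> 'I_d -> R) n :
  MT_solution kappa h a X V ->
  frob (V n.+1) <= (1 - h * kappa) * frob (V n) + h * kappa * nr (W X V n).
Proof.
move=> Hs; rewrite !frobN.
have E : (fun p : 'I_N * 'I_N * 'I_d => delta (V n.+1) p.1.1 p.1.2 p.2) =
  (fun p => (1 - h * kappa) * delta (V n) p.1.1 p.1.2 p.2 + h * kappa * W X V n p).
  apply/funext => [[[i j] k]] /=; rewrite /delta !(proj2 (Hs n _ _)) /W /=.
  set Sj := \sum_l _ * (V n l k - V n j k).
  have SjE : Sj = \sum_l phiMT a X n j l * (V n l k - V n i k) + (V n i k - V n j k).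
    rewrite /Sj -[X in _ = _ + X]mul1r -(phisum X n j) mulr_suml -big_split /=.
    by apply: eq_bigr => l _; ring.
  rewrite SjE.
  have -> : \sum_l (phiMT a X n i l - phiMT a X n j l) * (V n l k - V n i k) =
    \sum_l phiMT a X n i l * (V n l k - V n i k) - \sum_l phiMT a X n j l * (V n l k - V n i k).
    by rewrite -sumrB; apply: eq_bigr => l _; ring.
  ring.
have hk0 : 0 <= 1 - h * kappa by have := hk1; lra.
rewrite E; apply: le_trans (nr_tri _ _ _ _) _; apply: lerD.
  exact: nr_scale.
by apply: nr_scale; rewrite mulr_ge0 // ltW.
Qed.

Lemma Wbound (X V : nat -> 'I_N -> 'I_d -> R) n :
  \sum_p W X V n p ^+ 2 <=
    N%:R * phiLip N c1 c2 La ^+ 2 * frob (X n) ^+ 2 * frob (V n) ^+ 2.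
Proof.
rewrite trip.
set L := phiLip N c1 c2 La.
have term i j : \sum_k W X V n ((i, j), k) ^+ 2 <=
    N%:R * L ^+ 2 * enorm (delta (X n) i j) ^+ 2 * frob (V n) ^+ 2.
  rewrite /W /=.
  apply: le_trans (_ : \sum_k ((\sum_l (phiMT a X n i l - phiMT a X n j l) ^+ 2) *
      (\sum_l (V n l k - V n i k) ^+ 2)) <= _).
    by apply: ler_sum => k _; exact: CS.
  rewrite -mulr_sumr; apply: ler_pM.
  - exact: sum_sq_ge0.
  - by apply: sumr_ge0 => k _; exact: sum_sq_ge0.
  - apply: le_trans (_ : \sum_(l < N) (L * enorm (delta (X n) i j)) ^+ 2 <= _).
      by apply: ler_sum => l _; apply: sq_le; exact: philip.
    by rewrite sum_cst_ord exprMn mulrA.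
  - rewrite frob2 exchange_big /=; apply: ler_sum => l _.
    apply: (@single_le_sum R _ (fun j0 => \sum_k delta (V n) l j0 k ^+ 2) i).
    by move=> j0; exact: sum_sq_ge0.
apply: le_trans (ler_sum _ (fun i _ => ler_sum _ (fun j _ => term i j))) _.
rewrite le_eqVlt; apply/orP; left; apply/eqP.
rewrite (frob2 (X n)) mulr_sumr mulr_suml; apply: eq_bigr => i _.
rewrite mulr_sumr mulr_suml; apply: eq_bigr => j _.
by rewrite enorm2.
Qed.

Lemma Lpos : 0 < phiLip N c1 c2 La.
Proof.
have c20 : 0 < c2 := lt_le_trans hc1 hc12.
rewrite /phiLip mulr_gt0 //.
  by rewrite divr_gt0 // mulr_gt0 // ltr0n.
by rewrite addr_gt0 // divr_gt0.
Qed.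

Lemma LM : phiLip N c1 c2 La * Mconst N c1 c2 La = 1 / (4 * N%:R).
Proof.
have := Lpos; have N0 : 0 < N%:R :> R by rewrite ltr0n.
move=> L0; rewrite /Mconst; field.
by rewrite !gt_eqF.
Qed.

Lemma Mpos : 0 < Mconst N c1 c2 La.
Proof. have Lp := Lpos; by rewrite /Mconst divr_gt0 // mulr_gt0 // mulr_gt0 // ltr0n. Qed.

Lemma stab (X V : nat -> 'I_N -> 'I_d -> R) :
  MT_solution kappa h a X V ->
  frob (X 0%N) < Mconst N c1 c2 La ->
  frob (V 0%N) < kappa * int_psi N c1 c2 La (frob (X 0%N)) (Mconst N c1 c2 La) ->
  forall n, frob (X n) < 2 * Mconst N c1 c2 La.
Proof.
move=> Hs hx0 hv0.
set M := Mconst N c1 c2 La.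
set L := phiLip N c1 c2 La.
rewrite -/M in hx0 hv0.
have Mp : 0 < M := Mpos.
have Lp : 0 < L := Lpos.
have x0p := frob_ge0 (X 0%N).
have I0 : frob (V 0%N) < kappa * (M - frob (X 0%N)).
  apply: lt_le_trans hv0 _; rewrite ler_pM2l //.
  by apply: int_psi_le => //; rewrite ltW.
set L0 := frob (V 0%N) + kappa / 2 * frob (X 0%N).
have kx0 : 0 <= kappa * frob (X 0%N) by rewrite mulr_ge0 // ltW.
have L0M : L0 < kappa * M by rewrite /L0; lra.
suff H : forall n, frob (X n) < 2 * M /\ frob (V n) + kappa / 2 * frob (X n) <= L0.
  by move=> n; case: (H n).
elim => [|n [IHx IHl]].
  split; last by rewrite /L0.
  lra.
have step1 := @Xstep X V n Hs; have step2 := @Vstep X V n Hs.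
have xn0 := frob_ge0 (X n); have vn0 := frob_ge0 (V n).
have xn10 := frob_ge0 (X n.+1); have vn10 := frob_ge0 (V n.+1).
have Wb : nr (W X V n) <= frob (V n) / 2.
  apply: nr_le_sq; first by rewrite divr_ge0.
  apply: le_trans (Wbound X V n) _.
  have a1 : frob (X n) ^+ 2 <= (2 * M) ^+ 2.
    by apply: sq_le; rewrite ger0_norm // ltW.
  have a2 : N%:R * L ^+ 2 * (2 * M) ^+ 2 = 1 / (4 * N%:R) :> R.
    have -> : N%:R * L ^+ 2 * (2 * M) ^+ 2 = 4 * N%:R * (L * M) ^+ 2 by ring.
    by rewrite /L /M LM; field; rewrite gt_eqF // ltr0n.
  have a3 : 1 / (4 * N%:R) <= 1 / 4 :> R.
    rewrite ler_pdivrMr ?mulr_gt0 ?ltr0n //.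
    have -> : 1 / 4 * (4 * N%:R) = N%:R :> R by field.
    by rewrite ler1n.
  have a4 : N%:R * L ^+ 2 * frob (X n) ^+ 2 <= 1 / 4.
    apply: le_trans a3; rewrite -a2; apply: ler_wpM2l => //.
    by rewrite mulr_ge0 ?ler0n ?sqr_ge0.
  have a5 := ler_wpM2r (sqr_ge0 (frob (V n))) a4.
  apply: le_trans a5 _.
  rewrite le_eqVlt; apply/orP; left; apply/eqP; by field.
have hk0 : 0 <= h * kappa by rewrite mulr_ge0 // ltW.
have s3 := ler_wpM2l hk0 Wb.
have k2 : 0 <= kappa / 2 by rewrite divr_ge0 // ltW.
have s1 := ler_wpM2l k2 step1.
have Ln : frob (V n.+1) + kappa / 2 * frob (X n.+1) <= L0.
  apply: le_trans IHl; nra.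
split => //.
have : kappa / 2 * frob (X n.+1) < kappa / 2 * (2 * M).
  have -> : kappa / 2 * (2 * M) = kappa * M by field.
  lra.
by rewrite ltr_pM2l // divr_gt0.
Qed.

Lemma enorm_le_frob (y : 'I_N -> 'I_d -> R) i j : enorm (delta y i j) <= frob y.
Proof.
rewrite -(ler_pXn2r (_ : (0 < 2)%N)) ?nnegrE ?enorm_ge0 ?frob_ge0 //.
have -> : frob y ^+ 2 = \sum_i0 \sum_j0 enorm (delta y i0 j0) ^+ 2.
  rewrite /frob sqr_sqrtr //; do 2 (apply: sumr_ge0 => ? _); exact: sqr_ge0.
apply: le_trans (@single_le_sum R _ (fun j0 => enorm (delta y i j0) ^+ 2) j _) _.
  by move=> ?; exact: sqr_ge0.
apply: (@single_le_sum R _ (fun i0 => \sum_j0 enorm (delta y i0 j0) ^+ 2) i).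
by move=> ?; apply: sumr_ge0 => ? _; exact: sqr_ge0.
Qed.

Lemma dbl (P : 'I_N -> R) : \sum_i \sum_j (P i + P j) = 2 * N%:R * \sum_i P i.
Proof.
rewrite (eq_bigr (fun i => N%:R * P i + \sum_j P j)) => [|i _]; last first.
  by rewrite big_split /= sum_cst_ord.
by rewrite big_split /= sum_cst_ord -mulr_sumr; ring.
Qed.

Lemma sq_diff (x A B : R) : (x * A - x * B) ^+ 2 <= x ^+ 2 * (2 * A ^+ 2 + 2 * B ^+ 2).
Proof.
have := sqr_ge0 (x * A + x * B).
have -> : x ^+ 2 * (2 * A ^+ 2 + 2 * B ^+ 2) = (x * A - x * B) ^+ 2 + (x * A + x * B) ^+ 2 by ring.
lra.
Qed.

Lemma main (X V Xb Vb : nat -> 'I_N -> 'I_d -> R) :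
  MT_solution kappa h a X V ->
  MT_solution kappa h a Xb Vb ->
  frob (X 0%N) < Mconst N c1 c2 La ->
  frob (Xb 0%N) < Mconst N c1 c2 La ->
  frob (V 0%N) < kappa * int_psi N c1 c2 La (frob (X 0%N)) (Mconst N c1 c2 La) ->
  frob (Vb 0%N) < kappa * int_psi N c1 c2 La (frob (Xb 0%N)) (Mconst N c1 c2 La) ->
  forall n : nat,
    \sum_(i < N) \sum_(j < N) enorm (I1 kappa h a X V Xb n i j) ^+ 2
    <= 16 * h ^+ 2 * kappa ^+ 2 * La ^+ 2 * Mconst N c1 c2 La ^+ 2 / c1 ^+ 2
       * (1 + c2 / c1) ^+ 2 * frob (V n) ^+ 2.
Proof.
move=> HX HXb hx0 hxb0 hv0 hvb0 n.
have sx := @stab X V HX hx0 hv0 n.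
have sxb := @stab Xb Vb HXb hxb0 hvb0 n.
set M := Mconst N c1 c2 La in sx sxb *.
set L := phiLip N c1 c2 La.
have Mp : 0 < M := Mpos.
have Lp : 0 < L := Lpos.
have N0 : 0 < N%:R :> R by rewrite ltr0n.
have c20 : 0 < c2 := lt_le_trans hc1 hc12.
set c := fun i l => phiMT a X n i l - phiMT a Xb n i l.
have cb i l : `|c i l| <= 1 / (2 * N%:R).
  apply: le_trans.
    apply: (@phidiff R N c1 c2 (La * (2 * M))
     (fun m => a (enorm (delta (X n) i m))) (fun m => a (enorm (delta (Xb n) i m))) l hc1).
    - move=> m; exact: ha_b _ (enorm_ge0 _).
    - move=> m; exact: ha_b _ (enorm_ge0 _).
    - move=> m; apply: le_trans (ha_l _ _ (enorm_ge0 _) (enorm_ge0 _)) _.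
      rewrite ler_pM2l // ler_norml.
      have := enorm_le_frob (X n) i m; have := enorm_le_frob (Xb n) i m.
      have := enorm_ge0 (delta (X n) i m); have := enorm_ge0 (delta (Xb n) i m).
      move=> *; apply/andP; split; lra.
  have -> : La * (2 * M) / (N%:R * c1) * (1 + c2 / c1) = 2 * (L * M).
    by rewrite /L /phiLip; field; rewrite ?gt_eqF.
  rewrite /L /M LM le_eqVlt; apply/orP; left; apply/eqP; field.
  by rewrite gt_eqF.
set A := fun i k => \sum_l c i l * delta (V n) l i k.
set P := fun i => \sum_k A i k ^+ 2.
have P0 i : 0 <= P i by exact: sum_sq_ge0.
have Pb i : P i <= 1 / (4 * N%:R) * \sum_l \sum_k delta (V n) l i k ^+ 2.
  rewrite /P /A.
  apply: le_trans (_ : \sum_k ((\sum_l c i l ^+ 2) * (\sum_l delta (V n) l i k ^+ 2)) <= _).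
    by apply: ler_sum => k _; exact: CS.
  rewrite -mulr_sumr exchange_big /=; apply: ler_wpM2r.
    by apply: sumr_ge0 => l _; exact: sum_sq_ge0.
  apply: le_trans (_ : \sum_(l < N) (1 / (2 * N%:R)) ^+ 2 <= _).
    by apply: ler_sum => l _; apply: sq_le; exact: cb.
  rewrite sum_cst_ord le_eqVlt; apply/orP; left; apply/eqP; field.
  by rewrite gt_eqF.
have step1 : \sum_i \sum_j enorm (I1 kappa h a X V Xb n i j) ^+ 2 <=
    \sum_i \sum_j ((h * kappa) ^+ 2 * (2 * P i + 2 * P j)).
  apply: ler_sum => i _; apply: ler_sum => j _.
  rewrite enorm2 /P.
  apply: le_trans (_ : \sum_k (h * kappa) ^+ 2 * (2 * A i k ^+ 2 + 2 * A j k ^+ 2) <= _).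
    by apply: ler_sum => k _; rewrite /I1 /A /c /=; exact: sq_diff.
  by rewrite -mulr_sumr big_split /= -!mulr_sumr.
apply: le_trans step1 _.
have -> : \sum_i \sum_j ((h * kappa) ^+ 2 * (2 * P i + 2 * P j)) =
    (h * kappa) ^+ 2 * 2 * (2 * N%:R * \sum_i P i).
  rewrite -dbl mulr_sumr; apply: eq_bigr => i _.
  by rewrite [RHS]mulr_sumr; apply: eq_bigr => j _; ring.
have SP : \sum_i P i <= 1 / (4 * N%:R) * frob (V n) ^+ 2.
  apply: le_trans (ler_sum _ (fun i _ => Pb i)) _.
  rewrite -mulr_sumr frob2 exchange_big /= le_eqVlt; apply/orP; left; apply/eqP.
  done.
have hk2 : 0 <= (h * kappa) ^+ 2 * 2 * (2 * N%:R) by rewrite !mulr_ge0 ?sqr_ge0 // ltW.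
apply: le_trans (_ : (h * kappa) ^+ 2 * 2 * (2 * N%:R) * (1 / (4 * N%:R) * frob (V n) ^+ 2) <= _).
  have -> : (h * kappa) ^+ 2 * 2 * (2 * N%:R * \sum_i P i) =
    (h * kappa) ^+ 2 * 2 * (2 * N%:R) * \sum_i P i by ring.
  apply: ler_wpM2l; [exact: hk2 | exact: SP].
rewrite le_eqVlt; apply/orP; left; apply/eqP.
rewrite /M /Mconst -/L /L /phiLip; field.
by rewrite !gt_eqF // ?addr_gt0 ?divr_gt0 // mulr_gt0.
Qed.

End Model.

Theorem lemma4p4 (R : realType) (N d : nat) (kappa h c1 c2 La : R) (a : R -> R)
  (X V Xb Vb : nat -> 'I_N -> 'I_d -> R) :
  (1 <= N)%N -> (1 <= d)%N ->
  0 < kappa -> 0 < h -> h < 1 -> h < 1 / kappa ->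
  0 < c1 -> c1 <= c2 -> 0 < La ->
  (forall r, 0 <= r -> c1 <= a r /\ a r <= c2) ->
  (forall r1 r2, 0 <= r1 -> 0 <= r2 -> `|a r1 - a r2| <= La * `|r1 - r2|) ->
  MT_solution kappa h a X V ->
  MT_solution kappa h a Xb Vb ->
  frob (X 0%N) < Mconst N c1 c2 La ->
  frob (Xb 0%N) < Mconst N c1 c2 La ->
  frob (V 0%N) < kappa * int_psi N c1 c2 La (frob (X 0%N)) (Mconst N c1 c2 La) ->
  frob (Vb 0%N) < kappa * int_psi N c1 c2 La (frob (Xb 0%N)) (Mconst N c1 c2 La) ->
  forall n : nat,
    \sum_(i < N) \sum_(j < N) enorm (I1 kappa h a X V Xb n i j) ^+ 2
    <= 16 * h ^+ 2 * kappa ^+ 2 * La ^+ 2 * Mconst N c1 c2 La ^+ 2 / c1 ^+ 2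
       * (1 + c2 / c1) ^+ 2 * frob (V n) ^+ 2.
Proof.
move=> hN hd hk hh h1 hhk hc1 hc12 hLa hab hal HX HXb hx0 hxb0 hv0 hvb0 n.
by apply: main.
Qed.
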